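(* Assume Hypothesis (H1) and let $n\ge2$. Put $K_0:=(H_0-E_0)^{-1}\bar P_0$ and $E_1:=\langle\psi_0,V\psi_0\rangle$, and define recursively, for $m=1,\dots,n-2$, $$K_m:=\sum_{j=1}^{m}K_{j-1}\,(E_{m+1-j}-\delta_{jm}V)\,K_0,$$ and, for $m=2,\dots,n$, $E_m:=-\langle V\psi_0,K_{m-2}V\psi_0\rangle$, where it is assumed that $\bar P_0V\psi_0\in{\rm dom}(K_l)$ for $l=0,\dots,n-2$ (i.e. all operator products applied to $\bar P_0V\psi_0$ are well defined). Then for all $m=1,\dots,n$ $$\lim_{\lambda\downarrow0}\lambda^{-m}\Big(E(\lambda)-\sum_{k=0}^{m}E_k\lambda^k\Big)=0 .$$
   Context: Let $H_0$ and $V$ be self-adjoint operators in a Hilbert space $\mathcal H$. Hypothesis (H1): $H_0$ is bounded from below and $V$ is $H_0$-bounded; there is $\lambda_0>0$ such that for every $\lambda\in[0,\lambda_0]$ there is a simple eigenvalue $E(\lambda)$ of $H(\lambda)=H_0+\lambda V$ with eigenvector $\psi(\lambda)$; moreover $\lim_{\lambda\to0}\psi(\lambda)=\psi(0)\neq0$, $\lim_{\lambda\to0}E(\lambda)=E(0)$, and $\langle\psi(0),\psi(\lambda)\rangle=1$ for all $\lambda\in[0,\lambda_0]$. Write $E_0=E(0)$, $\psi_0=\psi(0)$, $P_0$ the orthogonal projection onto $\ker(H_0-E_0)=\mathbb C\psi_0$, $\bar P_0=1-P_0$. The operator $(H_0-E_0)^{-1}\bar P_0$ maps a vector $\xi$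 to the unique $\chi\in{\rm dom}(H_0)\cap\bar P_0\mathcal H$ with $(H_0-E_0)\chi=\bar P_0\xi$, on the set of $\xi$ for which such $\chi$ exists. $\delta_{ij}$ is the Kronecker delta. *)

(* Defs.v *)
From Stdlib Require Import Reals List.
Import ListNotations.
Open Scope R_scope.

Record cpx := mkC { Cre : R; Cim : R }.
Definition c0 : cpx := mkC 0 0.
Definition c1 : cpx := mkC 1 0.
Definition RtoC (r : R) : cpx := mkC r 0.
Definition cadd (a b : cpx) : cpx := mkC (Cre a + Cre b) (Cim a + Cim b).
Definition copp (a : cpx) : cpx := mkC (- Cre a) (- Cim a).
Definition csub (a b : cpx) : cpx := cadd a (copp b).
Definition cmul (a b : cpx) : cpx :=
  mkC (Cre a * Cre b - Cim a * Cim b) (Cre a * Cim b + Cim a * Cre b).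
Definition cconj (a : cpx) : cpx := mkC (Cre a) (- Cim a).
Definition cmod (a : cpx) : R := sqrt (Cre a * Cre a + Cim a * Cim a).

(** * Complex Hilbert spaces (inner product linear in the 2nd argument) *)
Record Hilbert := {
  hcar :> Type;
  hzero : hcar;
  hadd : hcar -> hcar -> hcar;
  hopp : hcar -> hcar;
  hscal : cpx -> hcar -> hcar;
  hinner : hcar -> hcar -> cpx;
  hadd_assoc : forall x y z, hadd x (hadd y z) = hadd (hadd x y) z;
  hadd_comm : forall x y, hadd x y = hadd y x;
  hadd_0 : forall x, hadd x hzero = x;
  hadd_opp : forall x, hadd x (hopp x) = hzero;
  hscal_1 : forall x, hscal c1 x = x;
  hscal_mul : forall a b x, hscal (cmul a b) x = hscal a (hscal b x);
  hscal_addv : forall a x y, hscal a (hadd x y) = hadd (hscal a x) (hscal a y);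
  hscal_adds : forall a b x, hscal (cadd a b) x = hadd (hscal a x) (hscal b x);
  hinner_conj : forall x y, hinner x y = cconj (hinner y x);
  hinner_addr : forall x y z, hinner x (hadd y z) = cadd (hinner x y) (hinner x z);
  hinner_scalr : forall a x y, hinner x (hscal a y) = cmul a (hinner x y);
  hinner_pos : forall x, 0 <= Cre (hinner x x);
  hinner_def : forall x, hinner x x = c0 -> x = hzero;
  hcomplete : forall u : nat -> hcar,
    (forall eps, 0 < eps -> exists N, forall p q, (N <= p)%nat -> (N <= q)%nat ->
        sqrt (Cre (hinner (hadd (u p) (hopp (u q))) (hadd (u p) (hopp (u q))))) < eps) ->
    exists l, forall eps, 0 < eps -> exists N, forall p, (N <= p)%nat ->
        sqrt (Cre (hinner (hadd (u p) (hopp l)) (hadd (u p) (hopp l)))) < eps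
}.

Arguments hzero {h}.
Arguments hadd {h}.
Arguments hopp {h}.
Arguments hscal {h}.
Arguments hinner {h}.

Section Ops.
Variable Hs : Hilbert.

Definition hsub (x y : Hs) : Hs := hadd x (hopp y).
Definition hnorm (x : Hs) : R := sqrt (Cre (hinner x x)).

Record Op := { odom : Hs -> Prop; oapp : Hs -> Hs }.

Definition is_linear_op (A : Op) : Prop :=
  odom A hzero /\
  (forall x y, odom A x -> odom A y -> odom A (hadd x y) /\
       oapp A (hadd x y) = hadd (oapp A x) (oapp A y)) /\
  (forall a x, odom A x -> odom A (hscal a x) /\
       oapp A (hscal a x) = hscal a (oapp A x)).

Definition dense (D : Hs -> Prop) : Prop :=
  forall x eps, 0 < eps -> exists y, D y /\ hnorm (hsub x y) < eps.

(** A = A^* : densely defined, symmetric, and dom(A^* ) ⊆ dom(A). *)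
Definition self_adjoint (A : Op) : Prop :=
  is_linear_op A /\ dense (odom A) /\
  (forall x y, odom A x -> odom A y -> hinner x (oapp A y) = hinner (oapp A x) y) /\
  (forall y z, (forall x, odom A x -> hinner y (oapp A x) = hinner z x) -> odom A y).

Definition bounded_below (A : Op) : Prop :=
  exists c : R, forall x, odom A x -> c * (hnorm x * hnorm x) <= Cre (hinner x (oapp A x)).

Definition rel_bounded (V A : Op) : Prop :=
  (forall x, odom A x -> odom V x) /\
  exists a b : R, 0 <= a /\ 0 <= b /\
    forall x, odom A x -> hnorm (oapp V x) <= a * hnorm (oapp A x) + b * hnorm x.

(** H(λ) = H0 + λ V, on dom(H0) (= dom H0 ∩ dom V). *)
Definition Hlam (H0 V : Op) (l : R) : Op :=
  {| odom := odom H0;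
     oapp := fun x => hadd (oapp H0 x) (hscal (RtoC l) (oapp V x)) |}.

Definition H1 (H0 V : Op) (lam0 : R) (E : R -> R) (psi : R -> Hs) : Prop :=
  self_adjoint H0 /\ self_adjoint V /\ bounded_below H0 /\ rel_bounded V H0 /\
  0 < lam0 /\
  (forall l, 0 <= l <= lam0 ->
     odom H0 (psi l) /\ psi l <> hzero /\
     oapp (Hlam H0 V l) (psi l) = hscal (RtoC (E l)) (psi l) /\
     (forall phi, odom H0 phi ->
        oapp (Hlam H0 V l) phi = hscal (RtoC (E l)) phi ->
        exists c, phi = hscal c (psi l))) /\
  (forall eps, 0 < eps -> exists d, 0 < d /\ forall l, 0 <= l <= lam0 -> l < d ->
      hnorm (hsub (psi l) (psi 0)) < eps /\ Rabs (E l - E 0) < eps) /\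
  (forall l, 0 <= l <= lam0 -> hinner (psi 0) (psi l) = c1).

(** Partial operators as (functional) relations: [A x y] means x ∈ dom A, A x = y. *)
Definition rel := Hs -> Hs -> Prop.

Definition rcomp (A B : rel) : rel := fun x z => exists y, B x y /\ A y z.

Fixpoint rsum (l : list rel) : rel :=
  match l with
  | [] => fun _ z => z = hzero
  | A :: l' => fun x z => exists y1 y2, A x y1 /\ rsum l' x y2 /\ z = hadd y1 y2
  end.

(** P̄0 = 1 - P0, P0 the orthogonal projection onto C ψ0. *)
Definition Pbar (psi0 : Hs) (x : Hs) : Hs :=
  hsub x (hscal (cmul (RtoC (/ (hnorm psi0 * hnorm psi0))) (hinner psi0 x)) psi0).

(** K0 = (H0 - E0)^{-1} P̄0 : K0 x χ iff χ ∈ dom H0 ∩ P̄0 H and (H0-E0)χ = P̄0 x. *)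
Definition K0rel (H0 : Op) (E0 : R) (psi0 : Hs) : rel := fun x chi =>
  odom H0 chi /\ hinner psi0 chi = c0 /\
  hsub (oapp H0 chi) (hscal (RtoC E0) chi) = Pbar psi0 x.

Definition Lrel (V : Op) (Ec : nat -> cpx) (m j : nat) : rel := fun x z =>
  if Nat.eqb j m then odom V x /\ z = hsub (hscal (Ec (m + 1 - j)%nat) x) (oapp V x)
  else z = hscal (Ec (m + 1 - j)%nat) x.

Definition Kstep (V : Op) (Ec : nat -> cpx) (K : nat -> rel) (K0 : rel) (m : nat) : rel :=
  rsum (map (fun j => rcomp (K (j - 1)%nat) (rcomp (Lrel V Ec m j) K0)) (seq 1 m)).

End Ops.

Arguments odom {Hs}.
Arguments oapp {Hs}.

Definition taylor (Ec : nat -> cpx) (m : nat) (l : R) : cpx :=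
  fold_right cadd c0 (map (fun k => cmul (Ec k) (RtoC (l ^ k))) (seq 0 (S m))).

(* Main.v *)
Require Import Defs.
From Stdlib Require Import Reals List Lra Lia ClassicalEpsilon Rlimit Arith.
Import ListNotations.
Import Defs.
Open Scope R_scope.

Lemma cpx_ext (a b : cpx) : Cre a = Cre b -> Cim a = Cim b -> a = b.
Proof. destruct a, b; simpl; intros; subst; reflexivity. Qed.

Ltac cpx_solve := apply cpx_ext; simpl; ring.

Lemma cpx_ring : ring_theory c0 c1 cadd cmul csub copp (@eq cpx).
Proof.
  constructor; intros; unfold c0, c1, cadd, cmul, csub, copp; cpx_solve.
Qed.
Add Ring cpxR : cpx_ring.

Lemma RtoC_add a b : RtoC (a + b) = cadd (RtoC a) (RtoC b).
Proof. unfold RtoC, cadd; cpx_solve. Qed.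
Lemma RtoC_mul a b : RtoC (a * b) = cmul (RtoC a) (RtoC b).
Proof. unfold RtoC, cmul; cpx_solve. Qed.
Lemma RtoC_opp a : RtoC (- a) = copp (RtoC a).
Proof. unfold RtoC, copp; cpx_solve. Qed.
Lemma RtoC_sub a b : RtoC (a - b) = csub (RtoC a) (RtoC b).
Proof. unfold RtoC, csub, cadd, copp; cpx_solve. Qed.
Lemma RtoC_0 : RtoC 0 = c0. Proof. reflexivity. Qed.
Lemma RtoC_1 : RtoC 1 = c1. Proof. reflexivity. Qed.
Lemma cconj_RtoC a : cconj (RtoC a) = RtoC a.
Proof. unfold cconj, RtoC; cpx_solve. Qed.
Lemma cconj_c1 : cconj c1 = c1. Proof. unfold cconj, c1; cpx_solve. Qed.
Lemma cconj_c0 : cconj c0 = c0. Proof. unfold cconj, c0; cpx_solve. Qed.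
Lemma cconj_add a b : cconj (cadd a b) = cadd (cconj a) (cconj b).
Proof. unfold cconj, cadd; cpx_solve. Qed.
Lemma cconj_mul a b : cconj (cmul a b) = cmul (cconj a) (cconj b).
Proof. unfold cconj, cmul; cpx_solve. Qed.
Lemma cconj_opp a : cconj (copp a) = copp (cconj a).
Proof. unfold cconj, copp; cpx_solve. Qed.
Lemma cconj_inv a : cconj (cconj a) = a.
Proof. unfold cconj; cpx_solve. Qed.
Lemma RtoC_inv_l l : l <> 0 -> cmul (RtoC (/ l)) (RtoC l) = c1.
Proof. intros; unfold RtoC, cmul, c1; apply cpx_ext; simpl; field; auto. Qed.
Arguments hadd_assoc {h}. Arguments hadd_comm {h}. Arguments hadd_0 {h}.
Arguments hadd_opp {h}. Arguments hscal_1 {h}. Arguments hscal_mul {h}.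
Arguments hscal_addv {h}. Arguments hscal_adds {h}. Arguments hinner_conj {h}.
Arguments hinner_addr {h}. Arguments hinner_scalr {h}. Arguments hinner_pos {h}.
Arguments hinner_def {h}.
Section HB.
Variable Hs : Hilbert.
Implicit Types x y z : Hs.

Lemma hadd_0l x : hadd hzero x = x.
Proof. rewrite hadd_comm; apply hadd_0. Qed.

Lemma hself_zero z : hadd z z = z -> z = hzero.
Proof.
  intro H. assert (hadd (hadd z z) (hopp z) = hadd z (hopp z)) by (rewrite H; auto).
  rewrite <- hadd_assoc, hadd_opp, hadd_0 in H0. exact H0.
Qed.

Lemma hscal_c0 x : hscal c0 x = hzero.
Proof.
  apply hself_zero. rewrite <- hscal_adds. f_equal. cpx_solve.
Qed.

Lemma hscal_zero a : hscal a (@hzero Hs) = hzero.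
Proof.
  apply hself_zero. rewrite <- hscal_addv, hadd_0. auto.
Qed.

Lemma hopp_unique x y : hadd x y = hzero -> y = hopp x.
Proof.
  intro H. rewrite <- (hadd_0 y), <- (hadd_opp x), hadd_assoc, (hadd_comm y x), H.
  apply hadd_0l.
Qed.

Lemma hopp_scal x : hopp x = hscal (copp c1) x.
Proof.
  symmetry; apply hopp_unique. rewrite <- (hscal_1 x) at 1.
  rewrite <- hscal_adds. replace (cadd c1 (copp c1)) with c0 by cpx_solve.
  apply hscal_c0.
Qed.

Lemma inner_0r x : hinner x (@hzero Hs) = c0.
Proof.
  rewrite <- (hscal_c0 hzero), hinner_scalr. cpx_solve.
Qed.

Lemma inner_addl x y z : hinner (hadd x y) z = cadd (hinner x z) (hinner y z).
Proof.
  rewrite hinner_conj, hinner_addr, cconj_add, <- !hinner_conj. auto.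
Qed.

Lemma inner_scall a x y : hinner (hscal a x) y = cmul (cconj a) (hinner x y).
Proof.
  rewrite hinner_conj, hinner_scalr, cconj_mul, <- hinner_conj. auto.
Qed.

Lemma inner_oppr x y : hinner x (hopp y) = copp (hinner x y).
Proof. rewrite hopp_scal, hinner_scalr. ring. Qed.

Lemma inner_oppl x y : hinner (hopp x) y = copp (hinner x y).
Proof. rewrite hopp_scal, inner_scall. unfold cconj, copp, c1. ring_simplify.
  apply cpx_ext; simpl; ring. Qed.

Lemma inner_subr x y z : hinner x (hsub Hs y z) = csub (hinner x y) (hinner x z).
Proof. unfold hsub. rewrite hinner_addr, inner_oppr. auto. Qed.

Lemma inner_subl x y z : hinner (hsub Hs x y) z = csub (hinner x z) (hinner y z).
Proof. unfold hsub. rewrite inner_addl, inner_oppl. auto. Qed.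

Lemma inner_self_real x : Cim (hinner x x) = 0.
Proof.
  pose proof (hinner_conj x x) as H. apply (f_equal Cim) in H. simpl in H. lra.
Qed.

Lemma inner_bound x y :
  Cre (hinner x y) * Cre (hinner x y) + Cim (hinner x y) * Cim (hinner x y)
  <= Cre (hinner x x) * (Cre (hinner y y) + 1).
Proof.
  set (a := hinner x y).
  set (M := Cre (hinner y y)). set (N := Cre (hinner x x)).
  set (t := / (M + 1)).
  assert (HM : 0 <= M) by apply hinner_pos.
  assert (HN : 0 <= N) by apply hinner_pos.
  assert (Ht : 0 < t) by (unfold t; apply Rinv_0_lt_compat; lra).
  set (z := hsub Hs x (hscal (cmul (RtoC t) (cconj a)) y)).
  pose proof (hinner_pos z) as Hz.
  unfold z in Hz. rewrite !inner_subl, !inner_subr, !inner_scall, !hinner_scalr in Hz.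
  rewrite (hinner_conj y x) in Hz. fold a in Hz.
  pose proof (inner_self_real y) as Hy. pose proof (inner_self_real x) as Hx.
  destruct a as [ar ai]. destruct (hinner y y) as [yr yi] eqn:EY.
  destruct (hinner x x) as [xr xi] eqn:EX. simpl in *. unfold M, N in *. subst.
  unfold csub, cadd, copp, cmul, cconj, RtoC in Hz. simpl in Hz.
  set (s := ar * ar + ai * ai) in *.
  assert (Hs0 : 0 <= s) by (unfold s; nra).
  assert (E1 : t * (yr + 1) = 1) by (unfold t; field; lra).
  assert (Hz2 : 0 <= xr - 2 * t * s + t * t * s * yr) by (unfold s; nra).
  assert (t * s <= xr) .
  { assert (t * t * s * yr <= t * s) .
    { assert (t * yr <= 1) by nra. 
      assert (t * s * (t * yr) <= t * s * 1) by (apply Rmult_le_compat_l; nra). nra. }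
    nra. }
  assert (s = t * s * (yr + 1)) by (rewrite Rmult_assoc, (Rmult_comm s), <- Rmult_assoc, E1; ring).
  rewrite H0. apply Rmult_le_compat_r; lra.
Qed.

End HB.
Section Lim.
Variable D : R -> Prop.

Lemma lim1_ext f g l : limit1_in f D l 0 -> (forall x, D x -> f x = g x) -> limit1_in g D l 0.
Proof.
  intros H He eps Heps. destruct (H eps Heps) as [a [Ha Hb]]. exists a; split; auto.
  intros x [Dx Hx]. rewrite <- He; auto.
Qed.

Definition clim (f : R -> cpx) (c : cpx) :=
  limit1_in (fun l => Cre (f l)) D (Cre c) 0 /\ limit1_in (fun l => Cim (f l)) D (Cim c) 0.

Lemma clim_ext f g c : clim f c -> (forall x, D x -> f x = g x) -> clim g c.
Proof.
  intros [H1 H2] He; split; [eapply lim1_ext; [apply H1|] | eapply lim1_ext; [apply H2|]];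
  intros; simpl; rewrite He; auto.
Qed.

Lemma clim_eq f c c' : clim f c -> c = c' -> clim f c'.
Proof. intros; subst; auto. Qed.

Lemma clim_const c : clim (fun _ => c) c.
Proof. split; [apply (limit_free (fun _ => Cre c) D 0 0) | apply (limit_free (fun _ => Cim c) D 0 0)]. Qed.

Lemma clim_add f g a b : clim f a -> clim g b -> clim (fun l => cadd (f l) (g l)) (cadd a b).
Proof.
  intros [H1 H2] [H3 H4]; split; simpl; [apply limit_plus | apply limit_plus]; auto.
Qed.

Lemma clim_opp f a : clim f a -> clim (fun l => copp (f l)) (copp a).
Proof. intros [H1 H2]; split; simpl; apply limit_Ropp; auto. Qed.

Lemma clim_sub f g a b : clim f a -> clim g b -> clim (fun l => csub (f l) (g l)) (csub a b).
Proof. intros; unfold csub; apply clim_add; auto; apply clim_opp; auto. Qed.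

Lemma clim_mul f g a b : clim f a -> clim g b -> clim (fun l => cmul (f l) (g l)) (cmul a b).
Proof.
  intros [H1 H2] [H3 H4]; split; simpl.
  - apply limit_minus; apply limit_mul; auto.
  - apply limit_plus; apply limit_mul; auto.
Qed.

Lemma clim_extract f c : clim f c -> forall eps, 0 < eps -> exists d, 0 < d /\
  forall l, D l -> 0 < l -> l < d -> cmod (csub (f l) c) < eps.
Proof.
  intros [H1 H2] eps Heps.
  destruct (H1 (eps/2)) as [d1 [Hd1 Hd1']]; [lra|].
  destruct (H2 (eps/2)) as [d2 [Hd2 Hd2']]; [lra|].
  exists (Rmin d1 d2); split; [apply Rmin_pos; auto|].
  intros l Dl Hl Hld.
  assert (Ha : Rabs (l - 0) < d1 /\ Rabs (l - 0) < d2).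
  { rewrite Rminus_0_r, Rabs_right by lra. split;
    [apply Rlt_le_trans with (1 := Hld); apply Rmin_l | apply Rlt_le_trans with (1 := Hld); apply Rmin_r]. }
  destruct Ha as [Ha1 Ha2].
  specialize (Hd1' l (conj Dl Ha1)). specialize (Hd2' l (conj Dl Ha2)).
  simpl in Hd1', Hd2'. unfold R_dist in *.
  unfold cmod, csub, cadd, copp; simpl.
  set (a := Cre (f l) + - Cre c) in *. set (b := Cim (f l) + - Cim c) in *.
  assert (Ha : Rabs a < eps/2) by (unfold a; replace (Cre (f l) + - Cre c) with (Cre (f l) - Cre c) by ring; auto).
  assert (Hb : Rabs b < eps/2) by (unfold b; replace (Cim (f l) + - Cim c) with (Cim (f l) - Cim c) by ring; auto).
  apply Rabs_def2 in Ha. apply Rabs_def2 in Hb.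
  rewrite <- (sqrt_square eps) by lra.
  apply sqrt_lt_1_alt. split; nra.
Qed.
End Lim.
Definition lsum (f : nat -> cpx) (l : list nat) : cpx := fold_right cadd c0 (map f l).

Lemma lsum_app f a b : lsum f (a ++ b) = cadd (lsum f a) (lsum f b).
Proof. unfold lsum in *; induction a; simpl; [ring|]. rewrite IHa; ring. Qed.

Lemma lsum_ext f g l : (forall j, In j l -> f j = g j) -> lsum f l = lsum g l.
Proof.
  induction l; intros H; simpl; auto. unfold lsum in *; simpl.
  rewrite H by (left; auto). rewrite IHl; auto. intros; apply H; right; auto.
Qed.

Lemma lsum_opp f l : lsum (fun j => copp (f j)) l = copp (lsum f l).
Proof. induction l; unfold lsum in *; simpl; [cpx_solve|]. rewrite IHl; ring. Qed.

Lemma lsum_scal_sub s f g l :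
  lsum (fun j => cmul s (csub (f j) (g j))) l = cmul s (csub (lsum f l) (lsum g l)).
Proof. induction l; unfold lsum in *; simpl; [cpx_solve|]. rewrite IHl; ring. Qed.

Lemma lsum_shift f k : lsum f (seq 1 (S k)) = cadd (f 1%nat) (lsum (fun j => f (S j)) (seq 1 k)).
Proof.
  unfold lsum. simpl. f_equal. rewrite <- seq_shift, map_map. auto.
Qed.

Lemma clim_lsum D (f : R -> nat -> cpx) c l :
  (forall j, In j l -> clim D (fun x => f x j) (c j)) ->
  clim D (fun x => lsum (f x) l) (lsum c l).
Proof.
  induction l; intros H; unfold lsum; simpl.
  - apply clim_const.
  - apply clim_add. apply H; left; auto. apply IHl; intros; apply H; right; auto.
Qed.

Lemma fold_cadd_last a l : fold_right cadd (cadd a c0) l = cadd (fold_right cadd c0 l) a.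
Proof. induction l; simpl; [ring|]. rewrite IHl; ring. Qed.

Lemma taylor_S Ec m l :
  taylor Ec (S m) l = cadd (taylor Ec m l) (cmul (Ec (S m)) (RtoC (l ^ (S m)))).
Proof.
  unfold taylor. rewrite (seq_S (S m)), map_app, fold_right_app. simpl map.
  simpl fold_right at 1. rewrite fold_cadd_last. simpl. ring.
Qed.

Lemma vec_eq_inner (Hs : Hilbert) (a b : Hs) : (forall z, hinner z a = hinner z b) -> a = b.
Proof.
  intros H. assert (Hd : hsub Hs a b = hzero).
  { apply hinner_def. rewrite inner_subr, !H. cpx_solve. }
  unfold hsub in Hd. apply hopp_unique in Hd.
  assert (hadd (hopp b) b = hzero) by (rewrite hadd_comm; apply hadd_opp).
  apply hopp_unique in H0. rewrite H0, Hd.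
  apply hopp_unique. rewrite hadd_comm. apply hadd_opp.
Qed.
Section Main.
Variable Hs : Hilbert.
Variables H0 V : Op Hs.
Variable lam0 : R.
Variable E : R -> R.
Variable psi : R -> Hs.
Variable n : nat.
Variable Ec : nat -> cpx.
Variable K : nat -> rel Hs.
Hypothesis HH1 : H1 Hs H0 V lam0 E psi.
Hypothesis Hn : (2 <= n)%nat.
Hypothesis HK0 : forall x y, K 0%nat x y <-> K0rel Hs H0 (E 0) (psi 0) x y.
Hypothesis HKm : forall m, (1 <= m <= n - 2)%nat ->
     forall x y, K m x y <-> Kstep Hs V Ec K (K 0%nat) m x y.
Hypothesis HE1 : Ec 1%nat = hinner (psi 0) (oapp V (psi 0)).
Hypothesis HEm : forall m, (2 <= m <= n)%nat ->
     exists y, K (m - 2)%nat (oapp V (psi 0)) y /\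
               Ec m = copp (hinner (oapp V (psi 0)) y).

Definition Dm (l : R) := 0 < l <= lam0.

Lemma lin0 : is_linear_op Hs H0.
Proof. destruct HH1 as [[? _] _]. auto. Qed.
Lemma sym0 x y : odom H0 x -> odom H0 y -> hinner x (oapp H0 y) = hinner (oapp H0 x) y.
Proof. destruct HH1 as [[_ [_ [? _]]] _]. auto. Qed.
Lemma symV x y : odom V x -> odom V y -> hinner x (oapp V y) = hinner (oapp V x) y.
Proof. destruct HH1 as [_ [[_ [_ [? _]]] _]]. auto. Qed.
Lemma domV x : odom H0 x -> odom V x.
Proof. destruct HH1 as [_ [_ [_ [[? _] _]]]]. auto. Qed.
Lemma lam0_pos : 0 < lam0.
Proof. destruct HH1 as [_ [_ [_ [_ [? _]]]]]. auto. Qed.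
Lemma eig l : 0 <= l <= lam0 ->
     odom H0 (psi l) /\ psi l <> hzero /\
     oapp (Hlam Hs H0 V l) (psi l) = hscal (RtoC (E l)) (psi l) /\
     (forall phi, odom H0 phi ->
        oapp (Hlam Hs H0 V l) phi = hscal (RtoC (E l)) phi ->
        exists c, phi = hscal c (psi l)).
Proof. destruct HH1 as [_ [_ [_ [_ [_ [? _]]]]]]. auto. Qed.
Lemma conv eps : 0 < eps -> exists d, 0 < d /\ forall l, 0 <= l <= lam0 -> l < d ->
      hnorm Hs (hsub Hs (psi l) (psi 0)) < eps /\ Rabs (E l - E 0) < eps.
Proof. destruct HH1 as [_ [_ [_ [_ [_ [_ [? _]]]]]]]. auto. Qed.
Lemma normz l : 0 <= l <= lam0 -> hinner (psi 0) (psi l) = c1.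
Proof. destruct HH1 as [_ [_ [_ [_ [_ [_ [_ ?]]]]]]]. auto. Qed.

Lemma l0 : 0 <= 0 <= lam0.
Proof. pose proof lam0_pos; lra. Qed.

Lemma psi0_norm : hinner (psi 0) (psi 0) = c1.
Proof. apply normz, l0. Qed.

Lemma dom_psi l : 0 <= l <= lam0 -> odom H0 (psi l).
Proof. intros; apply eig; auto. Qed.

Lemma eig_eq l : 0 <= l <= lam0 ->
  hadd (oapp H0 (psi l)) (hscal (RtoC l) (oapp V (psi l))) = hscal (RtoC (E l)) (psi l).
Proof. intros; apply eig; auto. Qed.

Lemma H0psi0 : oapp H0 (psi 0) = hscal (RtoC (E 0)) (psi 0).
Proof.
  rewrite <- (eig_eq 0 l0), RtoC_0, hscal_c0, hadd_0. auto.
Qed.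

Definition F (l : R) (u : Hs) : cpx := hinner (psi l) u.
Definition F0 (u : Hs) : cpx := hinner (psi 0) u.
Definition u0 : Hs := oapp V (psi 0).
Definition G (y : Hs) : cpx := hinner u0 y.

Lemma key_E l : 0 <= l <= lam0 ->
  RtoC (E l) = cadd (RtoC (E 0)) (cmul (RtoC l) (F l u0)).
Proof.
  intros Hl.
  pose proof (eig_eq l Hl) as He.
  apply (f_equal (fun v => hinner v (psi 0))) in He.
  rewrite inner_addl, !inner_scall, cconj_RtoC, cconj_RtoC in He.
  rewrite <- sym0 in He by (apply dom_psi; auto using l0).
  rewrite <- symV in He by (apply domV, dom_psi; auto using l0).
  rewrite H0psi0, hinner_scalr in He.
  rewrite (hinner_conj (psi l) (psi 0)), normz, cconj_c1 in He by auto.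
  unfold F, u0. transitivity (cmul (RtoC (E l)) c1); [ring|]. rewrite <- He. ring.
Qed.

Lemma hnorm_psi0 : hnorm Hs (psi 0) = 1.
Proof. unfold hnorm. rewrite psi0_norm. simpl. apply sqrt_1. Qed.

Lemma Pbar_eq u : Pbar Hs (psi 0) u = hsub Hs u (hscal (F0 u) (psi 0)).
Proof.
  unfold Pbar. rewrite hnorm_psi0, Rmult_1_l, Rinv_1, RtoC_1.
  unfold F0. f_equal. f_equal. ring.
Qed.

Ltac cpx_lin H := 
  apply cpx_ext; repeat (match goal with h : @eq cpx _ _ |- _ =>
     let h1 := fresh in let h2 := fresh in
     pose proof (f_equal Cre h) as h1; pose proof (f_equal Cim h) as h2; clear h end);
  unfold cadd, csub, copp, cmul, RtoC, c0, c1 in *; simpl in *; lra.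

Lemma key_K0 u chi l : K0rel Hs H0 (E 0) (psi 0) u chi -> 0 <= l <= lam0 ->
  F l u = cadd (F0 u) (csub (cmul (csub (RtoC (E l)) (RtoC (E 0))) (F l chi))
                            (cmul (RtoC l) (F l (oapp V chi)))).
Proof.
  intros [Hd [Ho Heq]] Hl.
  apply (f_equal (hinner (psi l))) in Heq.
  rewrite inner_subr, hinner_scalr, sym0 in Heq by (auto; apply dom_psi; auto).
  rewrite Pbar_eq, inner_subr, hinner_scalr in Heq.
  rewrite (hinner_conj (psi l) (psi 0)), normz, cconj_c1 in Heq by auto.
  pose proof (eig_eq l Hl) as He.
  apply (f_equal (fun v => hinner v chi)) in He.
  rewrite inner_addl, !inner_scall, cconj_RtoC, cconj_RtoC in He.
  rewrite <- symV in He by (apply domV; auto; apply dom_psi; auto).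
  unfold F, F0 in *.
  revert Heq He. generalize (hinner (oapp H0 (psi l)) chi).
  generalize (hinner (psi l) u) (hinner (psi 0) u) (hinner (psi l) chi) (hinner (psi l) (oapp V chi)).
  intros a b c d e H1' H2'.
  destruct a, b, c, d, e.
  unfold cadd, csub, copp, cmul, RtoC, c1, c0 in *; simpl in *.
  injection H1' as H1a H1b. injection H2' as H2a H2b.
  f_equal; lra.
Qed.

Lemma dom_sub x y : odom H0 x -> odom H0 y ->
  odom H0 (hsub Hs x y) /\ oapp H0 (hsub Hs x y) = hsub Hs (oapp H0 x) (oapp H0 y).
Proof.
  intros Hx Hy. destruct lin0 as [_ [Ha Hs']].
  unfold hsub. rewrite !hopp_scal.
  destruct (Hs' (copp c1) y Hy) as [Hy1 Hy2].
  destruct (Ha x _ Hx Hy1) as [H3 H4]. split; auto. rewrite H4, Hy2. auto.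
Qed.

Lemma K0_func u c c' : K0rel Hs H0 (E 0) (psi 0) u c -> K0rel Hs H0 (E 0) (psi 0) u c' -> c = c'.
Proof.
  intros [Hd [Ho Heq]] [Hd' [Ho' Heq']].
  destruct (dom_sub c c' Hd Hd') as [Hdd Hdo].
  destruct (eig 0 l0) as [_ [_ [_ Hu]]].
  destruct (Hu (hsub Hs c c') Hdd) as [a Ha].
  - simpl. rewrite RtoC_0, hscal_c0, hadd_0, Hdo.
    apply vec_eq_inner. intro z.
    rewrite <- Heq' in Heq. apply (f_equal (hinner z)) in Heq.
    rewrite !inner_subr, !hinner_scalr in Heq. rewrite inner_subr, hinner_scalr, inner_subr.
    revert Heq. generalize (hinner z (oapp H0 c)) (hinner z (oapp H0 c')) (hinner z c) (hinner z c').
    intros [p1 p2] [q1 q2] [r1 r2] [s1 s2] Hq.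
    unfold csub in *; unfold cadd, copp, cmul, RtoC in *; simpl in *. injection Hq as Hq1 Hq2. f_equal; lra.
  - apply vec_eq_inner. intro z.
    assert (Hz : hinner z (hsub Hs c c') = c0).
    { assert (a = c0).
      { apply (f_equal (hinner (psi 0))) in Ha.
        rewrite inner_subr, Ho, Ho', hinner_scalr, psi0_norm in Ha.
        transitivity (cmul a c1); [ring|]. rewrite <- Ha. cpx_solve. }
      subst a. rewrite Ha, hscal_c0. apply inner_0r. }
    rewrite inner_subr in Hz. revert Hz. generalize (hinner z c) (hinner z c').
    intros [p1 p2] [q1 q2] Hz. unfold csub in *; unfold cadd, copp, c0 in *; simpl in *.
    injection Hz as H1' H2'. f_equal; lra.
Qed.

Definition functional (A : rel Hs) := forall x y y', A x y -> A x y' -> y = y'.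

Lemma rcomp_func A B : functional A -> functional B -> functional (rcomp Hs A B).
Proof.
  intros HA HB x y y' [a [Ha1 Ha2]] [b [Hb1 Hb2]].
  rewrite (HB _ _ _ Ha1 Hb1) in Ha2. eauto.
Qed.

Lemma rsum_func l : (forall A, In A l -> functional A) -> functional (rsum Hs l).
Proof.
  induction l as [|A l IH]; intros H x y y'; simpl.
  - intros; subst; auto.
  - intros [a1 [a2 [Ha1 [Ha2 ->]]]] [b1 [b2 [Hb1 [Hb2 ->]]]].
    rewrite (H A (or_introl eq_refl) _ _ _ Ha1 Hb1).
    rewrite (IH (fun B HB => H B (or_intror HB)) _ _ _ Ha2 Hb2). auto.
Qed.

Definition Lf (m j : nat) (x : Hs) : Hs :=
  if Nat.eqb j m then hsub Hs (hscal (Ec (m + 1 - j)) x) (oapp V x)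
  else hscal (Ec (m + 1 - j)) x.

Lemma Lrel_inv m j x z : Lrel Hs V Ec m j x z -> z = Lf m j x.
Proof. unfold Lrel, Lf. destruct (Nat.eqb j m); intuition. Qed.

Lemma Lrel_func m j : functional (Lrel Hs V Ec m j).
Proof. intros x y y' H H'. apply Lrel_inv in H. apply Lrel_inv in H'. congruence. Qed.

Lemma K_func m : (m <= n - 2)%nat -> functional (K m).
Proof.
  induction m as [m IH] using lt_wf_ind. intros Hm.
  destruct m as [|m].
  - intros x y y' H H'. apply HK0 in H. apply HK0 in H'. eapply K0_func; eauto.
  - intros x y y' H H'.
    apply HKm in H; [|lia]. apply HKm in H'; [|lia].
    unfold Kstep in *. revert H H'. apply rsum_func.
    intros A HA. apply in_map_iff in HA. destruct HA as [j [<- Hj]].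
    apply in_seq in Hj.
    apply rcomp_func. apply IH; lia. apply rcomp_func. apply Lrel_func.
    apply IH; lia.
Qed.

Definition Kf (m : nat) (v : Hs) : Hs := epsilon (inhabits hzero) (fun y => K m v y).

Lemma Kf_spec m v y : (m <= n - 2)%nat -> K m v y -> Kf m v = y.
Proof.
  intros Hm Hy. unfold Kf. apply (K_func m Hm v). 
  apply epsilon_spec. eauto. auto.
Qed.

Lemma rsum_map_in (h : nat -> rel Hs) l x z :
  rsum Hs (map h l) x z -> forall j, In j l -> exists y, h j x y.
Proof.
  revert z. induction l as [|a l IH]; simpl; intros z Hz j Hj; [contradiction|].
  destruct Hz as [y1 [y2 [H1' [H2' _]]]]. destruct Hj as [<-|Hj]; eauto.
Qed.

Lemma rsum_map_G (h : nat -> rel Hs) l x z phi (Gf : Hs -> cpx) :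
  (forall a b, Gf (hadd a b) = cadd (Gf a) (Gf b)) -> Gf hzero = c0 ->
  rsum Hs (map h l) x z -> (forall j y, In j l -> h j x y -> Gf y = phi j) ->
  Gf z = lsum phi l.
Proof.
  intros Hadd H0' . revert z. induction l as [|a l IH]; simpl; intros z Hz Hp.
  - subst; auto.
  - destruct Hz as [y1 [y2 [Ha [Hb ->]]]]. unfold lsum; simpl. rewrite Hadd.
    rewrite (Hp a y1) by auto. f_equal. apply IH; auto.
Qed.

Lemma G_add a b : G (hadd a b) = cadd (G a) (G b).
Proof. apply hinner_addr. Qed.
Lemma G_zero : G hzero = c0.
Proof. apply inner_0r. Qed.

Lemma decomp m u y chi : (1 <= m <= n - 2)%nat -> K m u y -> K 0%nat u chi ->
  (forall j, (1 <= j <= m)%nat -> exists y', K (j - 1)%nat (Lf m j chi) y') /\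
  G y = lsum (fun j => G (Kf (j - 1)%nat (Lf m j chi))) (seq 1 m).
Proof.
  intros Hm Hy Hc. apply HKm in Hy; auto. unfold Kstep in Hy. split.
  - intros j Hj. destruct (rsum_map_in _ _ _ _ Hy j) as [y' Hy']. apply in_seq; lia.
    destruct Hy' as [v [[c [Hc' Hl]] Hk]].
    rewrite (K_func 0 (Nat.le_0_l _) _ _ _ Hc' Hc) in Hl. apply Lrel_inv in Hl. subst. eauto.
  - apply (rsum_map_G _ _ _ _ _ G G_add G_zero Hy).
    intros j y' Hj [v [[c [Hc' Hl]] Hk]]. apply in_seq in Hj.
    rewrite (K_func 0 (Nat.le_0_l _) _ _ _ Hc' Hc) in Hl. apply Lrel_inv in Hl. subst.
    rewrite (Kf_spec (j - 1) _ _ ltac:(lia) Hk). auto.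
Qed.

Definition cc (k : nat) (v : Hs) : cpx :=
  match k with O => F0 v | S k' => copp (G (Kf k' v)) end.

Fixpoint Q (l : R) (k : nat) (v : Hs) : cpx :=
  match k with O => F l v | S k' => cmul (RtoC (/ l)) (csub (Q l k' v) (cc k' v)) end.

Lemma S0_bound v eps : 0 < eps -> exists d, 0 < d /\ forall l, Dm l -> l < d ->
  Rabs (Cre (F l v) - Cre (F0 v)) < eps /\ Rabs (Cim (F l v) - Cim (F0 v)) < eps.
Proof.
  intros Heps.
  set (M := Cre (hinner v v)). assert (HM : 0 <= M) by apply hinner_pos.
  destruct (conv (eps / (M + 1))) as [d [Hd Hc]].
  { apply Rdiv_lt_0_compat; lra. }
  exists d; split; auto. intros l [Hl1 Hl2] Hld.
  destruct (Hc l ltac:(lra) Hld) as [Hn' _].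
  set (eta := hsub Hs (psi l) (psi 0)) in *.
  pose proof (inner_bound _ eta v) as Hb. fold M in Hb.
  assert (Heq : forall f : cpx -> R, f (F l v) - f (F0 v) = f (F l v) - f (F0 v)) by auto.
  assert (Hi : hinner eta v = csub (F l v) (F0 v)) by (unfold eta; rewrite inner_subl; auto).
  rewrite Hi in Hb. unfold csub, cadd, copp in Hb; simpl in Hb.
  set (N := Cre (hinner eta eta)) in *. assert (HN : 0 <= N) by apply hinner_pos.
  unfold hnorm in Hn'. fold N in Hn'.
  assert (HN2 : N < (eps / (M + 1)) * (eps / (M + 1))).
  { assert (sqrt N * sqrt N = N) by (apply sqrt_sqrt; auto).
    assert (0 <= sqrt N) by apply sqrt_pos.
    assert (0 < eps / (M + 1)) by (apply Rdiv_lt_0_compat; lra). nra. }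
  assert (HNM : N * (M + 1) < eps * eps).
  { assert (E2 : (eps / (M + 1)) * (eps / (M + 1)) * (M + 1) = eps * eps / (M + 1)) by (field; lra).
    assert (eps * eps / (M + 1) <= eps * eps).
    { unfold Rdiv. rewrite <- (Rmult_1_r (eps * eps)) at 2. apply Rmult_le_compat_l; [nra|].
      rewrite <- Rinv_1. apply Rinv_le_contravar; lra. }
    assert (N * (M + 1) < (eps / (M + 1)) * (eps / (M + 1)) * (M + 1)) by (apply Rmult_lt_compat_r; lra).
    lra. }
  set (a := Cre (F l v) + - Cre (F0 v)) in *. set (b := Cim (F l v) + - Cim (F0 v)) in *.
  assert (a * a < eps * eps) by nra. assert (b * b < eps * eps) by nra.
  unfold Rminus. fold a b. split; apply Rabs_def1; nra.
Qed.

Lemma S0 v : clim Dm (fun l => F l v) (F0 v).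
Proof.
  split; intros eps Heps; destruct (S0_bound v eps Heps) as [d [Hd Hb]];
  exists d; split; auto; intros x [Dx Hx]; simpl in *; unfold R_dist in *;
  rewrite Rminus_0_r in Hx; rewrite Rabs_right in Hx by (destruct Dx; lra);
  apply Hb; auto.
Qed.

Ltac cfield := apply cpx_ext; unfold csub; unfold cadd, copp, cmul, RtoC, c0, c1; cbn [Cre Cim]; field.

Definition W (x : Hs) : Hs := hsub Hs (hscal (Ec 1%nat) x) (oapp V x).

Lemma Lf_mm m x : Lf m m x = W x.
Proof. unfold Lf, W. rewrite Nat.eqb_refl. replace (m + 1 - m)%nat with 1%nat by lia. auto. Qed.

Lemma Lf_lt m j x : (j < m)%nat -> Lf m j x = hscal (Ec (m + 1 - j)) x.
Proof. intros; unfold Lf. replace (Nat.eqb j m) with false; auto. symmetry; apply Nat.eqb_neq; lia. Qed.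

Lemma F_scal l a x : F l (hscal a x) = cmul a (F l x).
Proof. apply hinner_scalr. Qed.
Lemma F_sub l x y : F l (hsub Hs x y) = csub (F l x) (F l y).
Proof. apply inner_subr. Qed.
Lemma F0_scal a x : F0 (hscal a x) = cmul a (F0 x).
Proof. apply hinner_scalr. Qed.
Lemma F0_sub x y : F0 (hsub Hs x y) = csub (F0 x) (F0 y).
Proof. apply inner_subr. Qed.

Lemma cc_u0 k : (k <= n - 1)%nat -> cc k u0 = Ec (S k).
Proof.
  intros Hk. destruct k as [|k].
  - simpl. unfold F0, u0. auto.
  - simpl. destruct (HEm (S (S k))) as [y [Hy Hey]]; [lia|].
    replace (S (S k) - 2)%nat with k in Hy by lia.
    rewrite Hey. rewrite (Kf_spec k _ y); auto. lia.
Qed.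

Lemma chi_facts v chi : K 0%nat v chi -> odom H0 chi /\ F0 chi = c0.
Proof. intros H. apply HK0 in H. destruct H as [? [? _]]. split; auto. Qed.

Lemma Q1_eq v chi l : K 0%nat v chi -> Dm l ->
  Q l 1 v = cadd (F l (W chi)) (cmul (csub (F l u0) (Ec 1%nat)) (F l chi)).
Proof.
  intros Hc [Hl1 Hl2]. simpl. 
  assert (Hl : 0 <= l <= lam0) by lra.
  rewrite (key_K0 v chi l) by (auto; apply HK0; auto).
  rewrite (key_E l Hl). unfold W. rewrite F_sub, F_scal.
  cfield; lra.
Qed.

Lemma cc1_eq v chi : K 0%nat v chi -> cc 1 v = F0 (W chi).
Proof.
  intros Hc. simpl. destruct (chi_facts v chi Hc) as [Hd Hz].
  rewrite (Kf_spec 0 v chi) by (auto; lia).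
  unfold W. rewrite F0_sub, F0_scal, Hz. unfold F0, G, u0.
  rewrite symV by (apply domV; auto; apply dom_psi, l0).
  ring.
Qed.

Lemma CI k v y chi : (1 <= k <= n - 2)%nat -> K k v y -> K 0%nat v chi ->
  cc (S k) v = cadd (cc k (W chi))
     (lsum (fun j => cc j (hscal (Ec (k + 1 - j)) chi)) (seq 1 (k - 1))).
Proof.
  intros Hk Hy Hc. destruct (decomp k v y chi Hk Hy Hc) as [_ HG].
  simpl cc at 1. rewrite (Kf_spec k v y) by (auto; lia). rewrite HG.
  destruct k as [|k]; [lia|].
  rewrite seq_S, lsum_app. replace (S k - 1)%nat with k by lia.
  unfold lsum at 2; simpl map; simpl fold_right.
  replace (1 + k - 1)%nat with k by lia. replace (1 + k)%nat with (S k) by lia.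
  rewrite Lf_mm. simpl cc at 2.
  rewrite (lsum_ext (fun j => G (Kf (j - 1) (Lf (S k) j chi)))
                    (fun j => G (Kf (j - 1) (hscal (Ec (S k + 1 - j)) chi)))).
  2:{ intros j Hj. apply in_seq in Hj. rewrite Lf_lt by lia. auto. }
  rewrite (lsum_ext (fun j => cc j (hscal (Ec (S k + 1 - j)) chi))
                    (fun j => copp (G (Kf (j - 1) (hscal (Ec (S k + 1 - j)) chi))))).
  2:{ intros j Hj. apply in_seq in Hj. destruct j as [|j]; [lia|]. simpl cc.
      replace (S j - 1)%nat with j by lia. auto. }
  rewrite lsum_opp, Nat.sub_0_r. simpl cc. ring.
Qed.

Lemma Q_0 l v : Q l 0 v = F l v.
Proof. reflexivity. Qed.
Lemma cc_0 v : cc 0 v = F0 v.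
Proof. reflexivity. Qed.

Lemma Q_S l k v : Q l (S k) v = cmul (RtoC (/ l)) (csub (Q l k v) (cc k v)).
Proof. reflexivity. Qed.

Lemma J v chi l : K 0%nat v chi -> Dm l -> forall k0,
  (S k0 <= n - 1)%nat -> (forall m, (m < S k0)%nat -> exists y, K m v y) ->
  Q l (S (S k0)) v = cadd (cadd (Q l (S k0) (W chi))
      (lsum (fun j => Q l j (hscal (Ec (S k0 + 1 - j)) chi)) (seq 1 k0)))
      (cmul (Q l (S k0) u0) (F l chi)).
Proof.
  intros Hc [Hl1 Hl2]. destruct (chi_facts v chi Hc) as [Hd Hz].
  induction k0 as [|k0 IH]; intros Hk Hdom.
  - rewrite Q_S, (Q1_eq v chi l Hc) by (split; lra). rewrite (cc1_eq v chi Hc).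
    rewrite !Q_S. simpl Q. rewrite (cc_u0 0) by lia. simpl cc.
    unfold lsum; simpl.
    apply cpx_ext; unfold csub; unfold cadd, copp, cmul, RtoC, c0, c1; cbn [Cre Cim]; ring.
  - rewrite Q_S, IH by (auto; lia).
    destruct (Hdom (S k0)) as [y Hy]; [lia|].
    rewrite (CI (S k0) v y chi) by (auto; lia).
    rewrite lsum_shift.
    rewrite (lsum_ext (fun j => Q l (S j) (hscal (Ec (S (S k0) + 1 - S j)) chi))
       (fun j => cmul (RtoC (/ l)) (csub (Q l j (hscal (Ec (S k0 + 1 - j)) chi))
                                         (cc j (hscal (Ec (S k0 + 1 - j)) chi))))).
    2:{ intros j _. reflexivity. }
    rewrite lsum_scal_sub.
    replace (S k0 - 1)%nat with k0 by lia.
    rewrite (Q_S l (S k0) (W chi)), (Q_S l (S k0) u0), (cc_u0 (S k0)) by lia.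
    rewrite (Q_S l 0 (hscal _ chi)), Q_0, cc_0, F_scal, F0_scal, Hz.
    set (A := lsum (fun j => Q l j (hscal (Ec (S k0 + 1 - j)) chi)) (seq 1 k0)).
    set (B := lsum (fun j => cc j (hscal (Ec (S k0 + 1 - j)) chi)) (seq 1 k0)).
    replace (S (S k0) + 1 - 1)%nat with (S (S k0)) by lia.
    cfield; lra.
Qed.

Definition Dom k v := forall m, (m < k)%nat -> exists y, K m v y.

Lemma Dom_u0 k : (k <= n - 1)%nat -> Dom k u0.
Proof.
  intros Hk m Hm. destruct (HEm (m + 2)) as [y [Hy _]]; [lia|].
  replace (m + 2 - 2)%nat with m in Hy by lia. eauto.
Qed.

Theorem main_ind : forall k, (k <= n - 1)%nat -> forall v, Dom k v ->
  clim Dm (fun l => Q l k v) (cc k v).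
Proof.
  intro k. induction k as [k IH] using lt_wf_ind. intros Hk v Hdom.
  destruct k as [|[|k0]].
  - exact (S0 v).
  - destruct (Hdom 0%nat) as [chi Hc]; [lia|].
    destruct (chi_facts v chi Hc) as [Hd Hz].
    eapply clim_ext.
    2:{ intros l Hl. symmetry. apply (Q1_eq v chi l Hc Hl). }
    eapply clim_eq.
    + apply clim_add. apply S0. apply clim_mul. apply clim_sub. apply S0. apply clim_const.
      apply S0.
    + rewrite (cc1_eq v chi Hc), Hz. ring.
  - destruct (Hdom 0%nat) as [chi Hc]; [lia|].
    destruct (chi_facts v chi Hc) as [Hd Hz].
    eapply clim_ext.
    2:{ intros l Hl. symmetry. apply (J v chi l Hc Hl k0); [lia|].
        intros m Hm; apply Hdom; lia. }
    destruct (Hdom (S k0)) as [y Hy]; [lia|].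
    eapply clim_eq.
    + apply clim_add; [apply clim_add|].
      * apply IH; [lia|lia|].
        intros m Hm. destruct (Hdom (S m)) as [ym Hym]; [lia|].
        destruct (decomp (S m) v ym chi ltac:(lia) Hym Hc) as [Hex _].
        destruct (Hex (S m)) as [y' Hy']; [lia|].
        rewrite Lf_mm in Hy'. replace (S m - 1)%nat with m in Hy' by lia. eauto.
      * apply clim_lsum. intros j Hj. apply in_seq in Hj.
        apply IH; [lia|lia|].
        intros i Hi. set (m := (i + (S k0 + 1 - j))%nat).
        destruct (Hdom m) as [ym Hym]; [unfold m; lia|].
        destruct (decomp m v ym chi ltac:(unfold m; lia) Hym Hc) as [Hex _].
        destruct (Hex (S i)) as [y' Hy']; [unfold m; lia|].
        rewrite Lf_lt in Hy' by (unfold m; lia).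
        replace (S i - 1)%nat with i in Hy' by lia.
        replace (m + 1 - S i)%nat with (S k0 + 1 - j)%nat in Hy' by (unfold m; lia). eauto.
      * apply clim_mul. apply IH; [lia|lia|]. apply Dom_u0; lia. apply S0.
    + rewrite (CI (S k0) v y chi) by (auto; lia). rewrite Hz.
      replace (S k0 - 1)%nat with k0 by lia. ring.
Qed.

Hypothesis HE0 : Ec 0%nat = RtoC (E 0).

Lemma taylor_id l : Dm l -> forall m0, (S m0 <= n)%nat ->
  csub (RtoC (E l)) (taylor Ec (S m0) l) = cmul (RtoC (l ^ S m0)) (csub (Q l m0 u0) (Ec (S m0))).
Proof.
  intros [Hl1 Hl2]. induction m0 as [|m0 IH]; intros Hm.
  - unfold taylor. simpl. rewrite (key_E l) by lra. rewrite HE0. cfield.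
  - rewrite taylor_S. rewrite Q_S, (cc_u0 m0) by lia.
    assert (Heq : RtoC (E l) = cadd (taylor Ec (S m0) l)
              (cmul (RtoC (l ^ S m0)) (csub (Q l m0 u0) (Ec (S m0))))).
    { rewrite <- IH by lia. ring. }
    rewrite Heq. change (l ^ S (S m0)) with (l * l ^ S m0).
    cfield; lra.
Qed.

Theorem main_sec : forall m, (1 <= m <= n)%nat ->
    forall eps, 0 < eps -> exists d, 0 < d /\
      forall l, 0 < l <= lam0 -> l < d ->
        cmod (cmul (RtoC (/ (l ^ m))) (csub (RtoC (E l)) (taylor Ec m l))) < eps.
Proof.
  intros m Hm eps Heps. destruct m as [|m0]; [lia|].
  assert (Hc := main_ind m0 ltac:(lia) u0 (Dom_u0 m0 ltac:(lia))).
  destruct (clim_extract _ _ _ Hc eps Heps) as [d [Hd Hb]].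
  exists d; split; auto. intros l Hl Hld.
  rewrite (taylor_id l Hl m0 ltac:(lia)).
  assert (Hp : l ^ S m0 <> 0) by (apply pow_nonzero; lra).
  replace (cmul (RtoC (/ l ^ S m0)) (cmul (RtoC (l ^ S m0)) (csub (Q l m0 u0) (Ec (S m0)))))
    with (csub (Q l m0 u0) (cc m0 u0)).
  - apply Hb; [exact Hl | lra | exact Hld].
  - rewrite cc_u0 by lia. cfield; auto.
Qed.

End Main.

Theorem mainTheorem6 (Hs : Hilbert) (H0 V : Op Hs) (lam0 : R) (E : R -> R)
  (psi : R -> Hs) (n : nat) (Ec : nat -> cpx) (K : nat -> rel Hs) :
  H1 Hs H0 V lam0 E psi ->
  (2 <= n)%nat ->
  (* K_0 = (H0 - E0)^{-1} P̄0 *)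
  (forall x y, K 0%nat x y <-> K0rel Hs H0 (E 0) (psi 0) x y) ->
  (* K_m = Σ_{j=1}^m K_{j-1} (E_{m+1-j} - δ_{jm} V) K_0, m = 1..n-2 *)
  (forall m, (1 <= m <= n - 2)%nat ->
     forall x y, K m x y <-> Kstep Hs V Ec K (K 0%nat) m x y) ->
  (* E_0, E_1 *)
  Ec 0%nat = RtoC (E 0) ->
  Ec 1%nat = hinner (psi 0) (oapp V (psi 0)) ->
  (* P̄0 V ψ0 ∈ dom(K_l), l = 0..n-2 *)
  (forall l, (l <= n - 2)%nat -> exists y, K l (Pbar Hs (psi 0) (oapp V (psi 0))) y) ->
  (* E_m = - <V ψ0, K_{m-2} V ψ0>, m = 2..n *)
  (forall m, (2 <= m <= n)%nat ->
     exists y, K (m - 2)%nat (oapp V (psi 0)) y /\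
               Ec m = copp (hinner (oapp V (psi 0)) y)) ->
  forall m, (1 <= m <= n)%nat ->
    forall eps, 0 < eps -> exists d, 0 < d /\
      forall l, 0 < l <= lam0 -> l < d ->
        cmod (cmul (RtoC (/ (l ^ m))) (csub (RtoC (E l)) (taylor Ec m l))) < eps.
Proof.
  intros HH1 Hn HK0 HKm HE0 HE1 _ HEm.
  exact (main_sec Hs H0 V lam0 E psi n Ec K HH1 Hn HK0 HKm HE1 HEm HE0).
Qed.
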